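(* For any $K\in\mathbb N$, there exists a $\textsc{ReLU}$+$\textsc{Step}$ network $f:\mathbb{R}\rightarrow\mathbb{R}$ of width $2$ such that $f(x)=q_K(x)$ for all $x\in[0,1]$.
   Context: $\mathcal C_K:=\{0,2^{-K},2\cdot 2^{-K},\dots,1-2^{-K}\}$ and $q_K:[0,1]\to\mathcal C_K$, $q_K(x):=\max\{c\in\mathcal C_K: c\le x\}$ (so $q_K(1)=1-2^{-K}$). $\textsc{ReLU}(x)=\max\{x,0\}$, $\textsc{Step}(x)=\mathbf 1[x\ge0]$. A $\textsc{ReLU}$+$\textsc{Step}$ network is $t_L\circ\sigma_{L-1}\circ\cdots\circ\sigma_1\circ t_1$ with affine maps $t_\ell:\mathbb R^{d_{\ell-1}}\to\mathbb R^{d_\ell}$ and $\sigma_\ell$ applying to each coordinate an activation chosen (per neuron) from $\{\textsc{ReLU},\textsc{Step}\}$; its width is $\max\{d_1,\dots,d_{L-1}\}$. *)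

(* Defs.v *)
From Stdlib Require Import Reals List Lra.
Import ListNotations.
Open Scope R_scope.

Inductive act := ReLU | Step.

Definition relu (x : R) : R := Rmax x 0.
Definition step (x : R) : R := if Rle_dec 0 x then 1 else 0.

Definition apply_act (a : act) (x : R) : R :=
  match a with ReLU => relu x | Step => step x end.

Definition dot (w v : list R) : R := fold_right Rplus 0 (map (fun p => fst p * snd p) (combine w v)).
Definition affine (W : list (list R)) (b : list R) (v : list R) : list R :=
  map (fun p => dot (fst p) v + snd p) (combine W b).

Definition affine_wf (m n : nat) (W : list (list R)) (b : list R) : Prop :=
  length W = n /\ length b = n /\ Forall (fun row => length row = m) W.

Record layer := mkLayer { lW : list (list R); lb : list R; lacts : list act }.

Definition layer_out_dim (l : layer) : nat := length (lb l).

Definition eval_layer (l : layer) (v : list R) : list R :=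
  map (fun p => apply_act (fst p) (snd p)) (combine (lacts l) (affine (lW l) (lb l) v)).

Fixpoint hidden_wf (m : nat) (ls : list layer) (dout : nat) : Prop :=
  match ls with
  | [] => m = dout
  | l :: ls' => affine_wf m (layer_out_dim l) (lW l) (lb l)
                /\ length (lacts l) = layer_out_dim l
                /\ hidden_wf (layer_out_dim l) ls' dout
  end.

(* A ReLU+Step network R -> R: t_L o sigma_{L-1} o t_{L-1} o ... o sigma_1 o t_1,
   here: a nonempty list of hidden layers (t_l, sigma_l), l=1..L-1, and a final affine t_L. *)
Record network := mkNet { hidden : list layer; outW : list (list R); outb : list R }.

Definition net_wf (N : network) : Prop :=
  hidden N <> [] /\
  exists d, hidden_wf 1 (hidden N) d /\ affine_wf d 1 (outW N) (outb N).

Definition width (N : network) : nat :=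
  fold_right max 0%nat (map layer_out_dim (hidden N)).

Definition eval_net (N : network) (x : R) : R :=
  hd 0 (affine (outW N) (outb N) (fold_left (fun v l => eval_layer l v) (hidden N) [x])).

Definition in_CK (K : nat) (c : R) : Prop :=
  exists i : nat, (i < 2 ^ K)%nat /\ c = INR i / 2 ^ K.

Definition is_qK (K : nat) (x y : R) : Prop :=
  in_CK K y /\ y <= x /\ forall c, in_CK K c -> c <= x -> c <= y.

(* Main.v *)
Require Import Defs.
From Stdlib Require Import Reals List Lra Lia.
Import ListNotations.
Open Scope R_scope.

Definition L0 : layer := mkLayer [[-1];[1]] [0;0] [ReLU;ReLU].
Definition LB (a th : R) : layer := mkLayer [[-1;1];[-1;1]] [a; a - th] [ReLU;Step].
Definition LC (c : R) : layer := mkLayer [[-1;0];[1;1]] [c; -c-1] [ReLU;ReLU].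

Lemma L0_eval x : eval_layer L0 [x] = [relu (-x); relu x].
Proof. unfold eval_layer, affine, dot; simpl. f_equal; [|f_equal]; f_equal; ring. Qed.

Lemma LB_eval a th n1 n2 :
  eval_layer (LB a th) [n1;n2] = [relu (a - n1 + n2); step ((a - n1 + n2) - th)].
Proof. unfold eval_layer, affine, dot; simpl. f_equal; [|f_equal]; f_equal; ring. Qed.

Lemma LC_eval c z b :
  eval_layer (LC c) [z;b] = [relu (c - z); relu (z + b - c - 1)].
Proof. unfold eval_layer, affine, dot; simpl. f_equal; [|f_equal]; f_equal; ring. Qed.

Section Net.
Variable K : nat.
Definition P : R := 2 ^ K.
Definition nn : nat := (2 ^ K)%nat.
Definition cc (i : nat) : R := INR i / P.
Definition aa (i : nat) : R := INR (Nat.pred i) / P.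
Definition th (i : nat) : R := if Nat.ltb (S i) nn then INR (S i) / P else 2.
Definition stage (i : nat) : list layer := [LB (aa i) (th i); LC (cc i)].
Definition theNet : network :=
  mkNet (L0 :: flat_map stage (seq 0 nn)) [[-1;1]] [aa nn].

Lemma P_pos : 0 < P.
Proof. unfold P; apply pow_lt; lra. Qed.

Lemma nn_pos : (0 < nn)%nat.
Proof. unfold nn. apply Nat.neq_0_lt_0. apply Nat.pow_nonzero. lia. Qed.

Lemma divP_le a b : (a <= b)%nat -> INR a / P <= INR b / P.
Proof.
  intros H. apply le_INR in H. unfold Rdiv. apply Rmult_le_compat_r; auto.
  left; apply Rinv_0_lt_compat, P_pos.
Qed.

Lemma divP_nonneg a : 0 <= INR a / P.
Proof. unfold Rdiv. apply Rmult_le_pos. apply pos_INR. left; apply Rinv_0_lt_compat, P_pos. Qed.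

Definition Inv (x : R) (m : nat) (s : R) : Prop :=
  (INR m / P <= x /\ (m < nn)%nat /\ s = x) \/
  (exists k, (k < m)%nat /\ INR k / P <= x /\ (x < INR (S k) / P \/ k = Nat.pred nn)
     /\ s = INR k / P).

Lemma relu_pos y : 0 <= y -> relu y = y.
Proof. intros; unfold relu; apply Rmax_left; auto. Qed.
Lemma relu_neg y : y <= 0 -> relu y = 0.
Proof. intros; unfold relu; apply Rmax_right; auto. Qed.
Lemma step1 y : 0 <= y -> step y = 1.
Proof. intros; unfold step; destruct Rle_dec; lra. Qed.
Lemma step0 y : y < 0 -> step y = 0.
Proof. intros; unfold step; destruct Rle_dec; lra. Qed.

Lemma stage_ok x m s : 0 <= x <= 1 -> (m < nn)%nat -> Inv x m s ->
  Inv x (S m) (cc m - relu (cc m - relu s) + relu (relu s + step (s - th m) - cc m - 1)).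
Proof.
  intros Hx Hm [[H1 [H2 H3]] | [k [H1 [H2 [H3 H4]]]]].
  - subst s. rewrite (relu_pos x) by lra.
    unfold cc in *.
    assert (Hc0 := divP_nonneg m).
    rewrite (relu_neg (INR m / P - x)) by lra.
    unfold th. destruct (Nat.ltb (S m) nn) eqn:E.
    + apply Nat.ltb_lt in E.
      destruct (Rle_dec (INR (S m) / P) x) as [Hle|Hlt].
      * rewrite step1 by lra. rewrite relu_pos by lra. left. repeat split; auto; ring.
      * rewrite step0 by lra. rewrite relu_neg by lra. right. exists m.
        repeat split; auto; try lra.
    + apply Nat.ltb_ge in E.
      rewrite step0 by lra. rewrite relu_neg by lra. right. exists m.
      repeat split; auto; try lra. right; lia.
  - subst s. unfold cc.
    assert (Hk0 := divP_nonneg k).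
    rewrite (relu_pos (INR k / P)) by lra.
    assert (Hkm : INR k / P <= INR m / P) by (apply divP_le; lia).
    assert (Hth : INR k / P < th m).
    { unfold th. destruct (Nat.ltb (S m) nn).
      - assert (INR k / P < INR (S k) / P).
        { unfold Rdiv. apply Rmult_lt_compat_r. apply Rinv_0_lt_compat, P_pos.
          apply lt_INR; lia. }
        assert (INR (S k) / P <= INR (S m) / P) by (apply divP_le; lia). lra.
      - lra. }
    rewrite step0 by lra. rewrite relu_pos by lra. rewrite relu_neg by lra.
    right. exists k. repeat split; auto; try lra.
Qed.

Lemma fold_inv x : 0 <= x <= 1 -> forall m, (m <= nn)%nat ->
  exists n1 n2, fold_left (fun v l => eval_layer l v) (flat_map stage (seq 0 m)) [relu (-x); relu x]
     = [n1; n2] /\ Inv x m (aa m - n1 + n2).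
Proof.
  intros Hx m. induction m as [|m IH]; intros Hm.
  - exists (relu (-x)), (relu x). split; [reflexivity|].
    left. unfold aa; simpl. rewrite relu_neg by lra. rewrite relu_pos by lra.
    repeat split; try lra. apply nn_pos.
  - destruct IH as [n1 [n2 [E I]]]; [lia|].
    rewrite seq_S, flat_map_app, fold_left_app, E. simpl.
    rewrite LB_eval, LC_eval.
    eexists; eexists; split; [reflexivity|].
    assert (Haa : aa (S m) = cc m) by reflexivity.
    rewrite Haa.
    replace (cc m - relu (cc m - relu (aa m - n1 + n2)) +
      relu (relu (aa m - n1 + n2) + step (aa m - n1 + n2 - th m) - cc m - 1))
      with (cc m - relu (cc m - relu (aa m - n1 + n2)) +
      relu (relu (aa m - n1 + n2) + step (aa m - n1 + n2 - th m) - cc m - 1)) by ring.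
    apply stage_ok; auto.
Qed.

End Net.

Lemma hwf : forall K l, hidden_wf 2 (flat_map (stage K) l) 2.
Proof.
  intros K l; induction l as [|i l IH]; simpl; auto.
  unfold affine_wf, layer_out_dim; simpl.
  repeat split; auto; repeat constructor.
Qed.

Lemma wid : forall K l, (fold_right max 0 (map layer_out_dim (flat_map (stage K) l)) <= 2)%nat.
Proof.
  intros K l; induction l as [|i l IH]; simpl; [lia|].
  revert IH; generalize (fold_right Init.Nat.max 0%nat (map layer_out_dim (flat_map (stage K) l))).
  intros n IH; destruct n as [|[|[|n]]]; simpl; lia.
Qed.

Theorem lemma4 : forall K : nat,
  exists N : network,
    net_wf N /\ width N = 2%nat /\
    forall x : R, 0 <= x <= 1 -> is_qK K x (eval_net N x).
Proof.
  intros K. exists (theNet K). split; [|split].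
  - split; [discriminate|]. exists 2%nat. split.
    + simpl. split; [unfold affine_wf, layer_out_dim; simpl; repeat split; repeat constructor|].
      split; [reflexivity|]. apply hwf.
    + unfold affine_wf; simpl. repeat split; repeat constructor.
  - unfold width. change (Nat.max 2 (fold_right Nat.max 0%nat (map layer_out_dim (flat_map (stage K) (seq 0 (nn K))))) = 2%nat).
    pose proof (wid K (seq 0 (nn K))). lia.
  - intros x Hx.
    destruct (fold_inv K x Hx (nn K) (le_n _)) as [n1 [n2 [E I]]].
    unfold eval_net; simpl. rewrite L0_eval, E.
    unfold affine, dot; simpl.
    replace (-1 * n1 + (1 * n2 + 0) + aa K (nn K)) with (aa K (nn K) - n1 + n2) by ring.
    destruct I as [[_ [H _]] | [k [Hk [H1 [H2 H3]]]]]; [lia|].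
    rewrite H3. unfold P in *.
    split; [|split].
    + exists k. split; auto.
    + auto.
    + intros c [i [Hi Hc]] Hcx. subst c.
      apply divP_le. unfold nn in *.
      destruct H2 as [H2|H2].
      * assert (INR i < INR (S k)).
        { apply (Rmult_lt_reg_r (/ 2 ^ K)). apply Rinv_0_lt_compat, P_pos.
          unfold P, Rdiv in *. lra. }
        apply INR_lt in H. lia.
      * lia.
Qed.
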